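(* For every acyclic weighted digraph $D$ in which every arc has weight at least $1$, $\mathrm{mac}(D)\ge\frac{w(D)}{4}+\frac{w(D)^{0.6}}{24}$.
   Context: A weighted digraph $D=(V,A,w)$ is a digraph without loops or parallel arcs (opposite arcs allowed) with weights $w:A\to\mathbb{R}_{\ge0}$; $w(D)$ is the total arc weight. For a partition $(X,Y)$ of $V$, $w(X,Y)$ is the total weight of arcs from $X$ to $Y$, and $\mathrm{mac}(D)=\max_{(X,Y)}w(X,Y)$. Acyclic means containing no directed cycle. *)

(* Defs.v *)
From mathcomp Require Import all_boot all_order all_algebra.
From mathcomp Require Import all_classical all_reals all_analysis.
Set Implicit Arguments. Unset Strict Implicit. Unset Printing Implicit Defensive.
Import Order.TTheory GRing.Theory Num.Theory.
Local Open Scope ring_scope.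

(* A weighted digraph on the finite vertex type T: an arc relation [a]
   (irreflexive: no loops; being a relation, there are no parallel arcs,
   while opposite arcs are allowed) and a weight function [w] on ordered pairs,
   only meaningful on arcs. *)
Definition loopless (T : finType) (a : rel T) : Prop := forall x, ~~ a x x.

Definition nonneg_weights (R : realType) (T : finType) (a : rel T)
  (w : T -> T -> R) : Prop := forall x y, a x y -> 0 <= w x y.

Definition total_weight (R : realType) (T : finType) (a : rel T)
  (w : T -> T -> R) : R :=
  \sum_(x : T) \sum_(y : T | a x y) w x y.

Definition cut_weight (R : realType) (T : finType) (a : rel T)
  (w : T -> T -> R) (X : {set T}) : R :=
  \sum_(x in X) \sum_(y in ~: X | a x y) w x y.

Definition mac (R : realType) (T : finType) (a : rel T) (w : T -> T -> R) : R :=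
  \big[Num.max/0]_(X : {set T}) cut_weight a w X.

Definition acyclic (T : finType) (a : rel T) : Prop :=
  forall (x : T) (p : seq T), p != [::] -> path a x p -> last x p != x.

(* Main.v *)
Require Import Defs.
From mathcomp Require Import all_boot all_order all_algebra.
From mathcomp Require Import all_classical all_reals all_analysis.
From mathcomp Require Import ring lra zify.
Import Order.TTheory GRing.Theory Num.Theory.
Local Open Scope ring_scope.
Set Implicit Arguments. Unset Strict Implicit.

Lemma natr_and (R : realType) (b1 b2 : bool) :
  ((b1 && b2)%:R : R) = b1%:R * b2%:R.
Proof. by case: b1; case: b2; rewrite /= ?mulr1 ?mulr0 ?mul0r. Qed.

Lemma prod_distr_bool (R : realType) (T : finType) (G : T -> bool -> R) :
  \sum_(f : {ffun T -> bool}) \prod_i G i (f i) = \prod_i (G i true + G i false).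
Proof.
rewrite -bigA_distr_bigA; apply: eq_bigr => i _; by rewrite big_bool.
Qed.

Lemma prod_if1 (R : realType) (T : finType) (x : T) (c : T -> R) :
  \prod_i (if i == x then c i else 1) = c x.
Proof.
rewrite -big_mkcond /=; exact: big_pred1_eq.
Qed.

Lemma pair_marg (R : realType) (T : finType) (F : T -> bool -> R)
  (hF1 : forall i, F i true + F i false = 1) (x y : T) (bx b_y : bool) :
  \sum_(f : {ffun T -> bool}) (\prod_i F i (f i)) * ((f x == bx) && (f y == b_y))%:R
  = if x == y then (bx == b_y)%:R * F x bx else F x bx * F y b_y.
Proof.
pose h i j := ((if i == x then (j == bx)%:R else 1) * (if i == y then (j == b_y)%:R else 1) : R).
transitivity (\sum_(f : {ffun T -> bool}) \prod_i (F i (f i) * h i (f i))).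
  apply: eq_bigr => f _; rewrite big_split /= big_split /= prod_if1 prod_if1.
  by rewrite natr_and mulrA.
rewrite (@prod_distr_bool R T (fun i j => F i j * h i j)).
have hb : forall i, i != x -> i != y -> F i true * h i true + F i false * h i false = 1.
  by move=> i /negbTE ex /negbTE ey; rewrite /h ex ey !mulr1.
have [exy|nxy] := eqVneq x y.
  subst y.
  rewrite (bigD1 x) //= big1; last by move=> i ni; exact: hb.
  rewrite mulr1 /h; clear hb h; rewrite eqxx.
  by case: bx; case: b_y => /=; rewrite ?mulr1 ?mulr0 ?mul0r ?mulr0 ?addr0 ?add0r ?mul1r.
rewrite (bigD1 x) //= (bigD1 y) //=; last by rewrite eq_sym.
rewrite big1; last by move=> i /andP[ni nj]; exact: hb.
rewrite mulr1 /h; clear hb h; rewrite eqxx.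
have -> : (x == y) = false by exact/negbTE.
have -> : (y == x) = false by rewrite eq_sym; exact/negbTE.
by case: bx; case: b_y; rewrite /= ?eqxx ?mulr1 ?mulr0 ?mul0r ?addr0 ?add0r ?mul1r.
Qed.

Lemma cutE (R : realType) (T : finType) (a : rel T) (w : T -> T -> R) (X : {set T}) :
  cut_weight a w X = \sum_x \sum_(y | a x y) w x y * ((x \in X) && (y \notin X))%:R.
Proof.
rewrite /cut_weight big_mkcond; apply: eq_bigr => x _.
case: (boolP (x \in X)) => hx /=.
  rewrite big_mkcond [RHS]big_mkcond; apply: eq_bigr => y _.
  rewrite !inE; case: (y \in X); case: (a x y); by rewrite /= ?mulr1 ?mulr0.
by rewrite big1 // => y _; rewrite mulr0.
Qed.

Lemma mac_ge (R : realType) (T : finType) (a : rel T) (w : T -> T -> R) (X : {set T}) :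
  cut_weight a w X <= mac a w.
Proof. by rewrite /mac (bigD1 X) //= le_max lexx. Qed.

Lemma avg_mac (R : realType) (T : finType) (a : rel T) (w : T -> T -> R)
  (F : T -> bool -> R) (hF0 : forall i j, 0 <= F i j)
  (hF1 : forall i, F i true + F i false = 1) (r : T -> T) (s : T -> bool) :
  \sum_x \sum_(y | a x y) w x y *
     (if r x == r y then (s x == ~~ s y)%:R * F (r x) (s x)
      else F (r x) (s x) * F (r y) (~~ s y)) <= mac a w.
Proof.
have S1 : \sum_(f : {ffun T -> bool}) \prod_i F i (f i) = 1.
  by rewrite prod_distr_bool big1 // => i _; rewrite hF1.
pose X := fun f : {ffun T -> bool} => [set v | f (r v) == s v].
apply: (@le_trans _ _ (\sum_(f : {ffun T -> bool}) (\prod_i F i (f i)) * cut_weight a w (X f))).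
  rewrite le_eqVlt; apply/orP; left; apply/eqP; symmetry.
  under eq_bigr => f _ do rewrite cutE mulr_sumr.
  rewrite exchange_big /=; apply: eq_bigr => x _.
  under eq_bigr => f _ do rewrite mulr_sumr.
  rewrite exchange_big /=; apply: eq_bigr => y _.
  rewrite -(@pair_marg R T F hF1) mulr_sumr; apply: eq_bigr => f _.
  rewrite /X !inE.
  have -> : (~~ (f (r y) == s y)) = (f (r y) == ~~ s y).
    by case: (f (r y)); case: (s y).
  by rewrite mulrCA.
apply: (@le_trans _ _ (\sum_(f : {ffun T -> bool}) (\prod_i F i (f i)) * mac a w)).
  apply: ler_sum => f _; apply: ler_wpM2l; last exact: mac_ge.
  by apply: prodr_ge0 => i _.
by rewrite -mulr_suml S1 mul1r.
Qed.

Lemma wsum_split (R : realType) (T : finType) (a : rel T) (w : T -> T -> R)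
  (c d : R) (ind : T -> T -> bool) :
  \sum_x \sum_(y | a x y) w x y * (c + d * (ind x y)%:R)
  = c * total_weight a w + d * \sum_x \sum_(y | a x y) w x y * (ind x y)%:R.
Proof.
rewrite /total_weight mulr_sumr mulr_sumr -big_split /=; apply: eq_bigr => x _.
rewrite mulr_sumr mulr_sumr -big_split /=; apply: eq_bigr => y _.
by rewrite mulrDr mulrC mulrCA.
Qed.

Lemma step_mac (R : realType) (T : finType) (a : rel T) (w : T -> T -> R)
  (hl : loopless a) (hw : nonneg_weights a w) (P : {set T})
  (hP : forall x y, a x y -> y \in P -> x \in P) (d : R) (hd0 : 0 <= d) (hd1 : d <= 2^-1) :
  total_weight a w / 4%:R + d * cut_weight a w P - d ^+ 2 * total_weight a w <= mac a w.
Proof.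
pose p v : R := if v \in P then 2^-1 + d else 2^-1 - d.
have hp0 : forall v, 0 <= p v by move=> v; rewrite /p; case: ifP => _; lra.
have hp1 : forall v, p v <= 1 by move=> v; rewrite /p; case: ifP => _; lra.
pose F v (b : bool) := if b then p v else 1 - p v.
have hF0 : forall i j, 0 <= F i j by move=> i [|]; rewrite /F ?subr_ge0.
have hF1 : forall i, F i true + F i false = 1 by move=> i; rewrite /F addrC subrK.
apply: (le_trans _ (@avg_mac R T a w F hF0 hF1 id (fun _ => true))).
have -> : total_weight a w / 4%:R + d * cut_weight a w P - d ^+ 2 * total_weight a w
  = \sum_x \sum_(y | a x y) w x y * ((4%:R^-1 - d ^+ 2) + d * ((x \in P) && (y \notin P))%:R).
  by rewrite wsum_split cutE; lra.
apply: ler_sum => x _; apply: ler_sum => y axy.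
have nxy : (x == y) = false.
  by apply/negbTE; apply/eqP => exy; move: (hl y); rewrite -{1}exy axy.
rewrite nxy; apply: ler_wpM2l; first exact: hw.
rewrite /F /p /=.
case: (boolP (y \in P)) => hy.
  by rewrite (hP x y axy hy) /= mulr0 addr0; lra.
case: (x \in P) => /=; rewrite ?mulr1 ?mulr0 ?addr0; nra.
Qed.

Definition matchingb (T : finType) (a : rel T) (S : {set T * T}) : bool :=
  [forall e in S, a e.1 e.2] &&
  [forall e in S, forall e' in S, (e != e') ==>
     [&& e.1 != e'.1, e.1 != e'.2, e.2 != e'.1 & e.2 != e'.2]].

Definition ws (R : realType) (T : finType) (w : T -> T -> R) (S : {set T * T}) : R :=
  \sum_(e in S) w e.1 e.2.

Lemma matchingP (T : finType) (a : rel T) (S : {set T * T}) :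
  matchingb a S -> (forall e, e \in S -> a e.1 e.2) /\
   (forall e e', e \in S -> e' \in S -> e != e' ->
     [&& e.1 != e'.1, e.1 != e'.2, e.2 != e'.1 & e.2 != e'.2]).
Proof.
case/andP => /forallP h1 /forallP h2; split.
  by move=> e he; move: (h1 e); rewrite he.
move=> e e' he he' ne; move: (h2 e); rewrite he /= => /forallP /(_ e').
by rewrite he' ne.
Qed.

Lemma two_cycle (T : finType) (a : rel T) (hac : acyclic a) x y :
  a x y -> a y x -> False.
Proof.
move=> hxy hyx; have := hac x [:: y; x] isT; rewrite /= hxy hyx /= eqxx.
by move=> /(_ isT).
Qed.

Lemma ws_arcs (R : realType) (T : finType) (a : rel T) (w : T -> T -> R) (S : {set T * T}) :
  (forall e, e \in S -> a e.1 e.2) ->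
  \sum_x \sum_(y | a x y) w x y * ((x, y) \in S)%:R = ws w S.
Proof.
move=> hS; rewrite /ws.
under eq_bigr => x _ do rewrite big_mkcond /=.
rewrite pair_big /= [RHS]big_mkcond /=; apply: eq_bigr => [[x y]] _ /=.
case: (boolP ((x, y) \in S)) => h.
  by rewrite (hS _ h) mulr1.
by case: (a x y); rewrite ?mulr0.
Qed.

Lemma match_mac (R : realType) (T : finType) (a : rel T) (w : T -> T -> R)
  (hl : loopless a) (hw : nonneg_weights a w) (hac : acyclic a) (N : {set T * T})
  (hN : matchingb a N) :
  total_weight a w / 4%:R + ws w N / 4%:R <= mac a w.
Proof.
have [hN1 hN2] := matchingP hN.
pose F (v : T) (b : bool) : R := 2^-1.
have hF0 : forall i j, 0 <= F i j by move=> i j; rewrite /F; lra.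
have hF1 : forall i, F i true + F i false = 1 by move=> i; rewrite /F; lra.
pose r v := if [pick u | (u, v) \in N] is Some u then u else v.
pose s v := if [pick u | (u, v) \in N] is Some u then false else true.
apply: (le_trans _ (@avg_mac R T a w F hF0 hF1 r s)).
have -> : total_weight a w / 4%:R + ws w N / 4%:R
  = \sum_x \sum_(y | a x y) w x y * (4%:R^-1 + 4%:R^-1 * ((x, y) \in N)%:R).
  by rewrite (wsum_split a w _ _ (fun x y => (x, y) \in N)) (@ws_arcs R T a w N hN1); lra.
apply: ler_sum => x _; apply: ler_sum => y axy.
apply: ler_wpM2l; first exact: hw.
have nxy : x != y.
  by apply/eqP => exy; move: (hl y); rewrite -{1}exy axy.
rewrite /F.
case: (boolP ((x, y) \in N)) => hxy.
  have ry : r y = x.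
    rewrite /r; case: pickP => [u hu|/(_ x)]; last by rewrite hxy.
    apply/eqP; apply: contraT => nux.
    have := hN2 _ _ hu hxy; rewrite xpair_eqE negb_and nux /= eqxx.
    by move=> /(_ isT); rewrite !andbF.
  have sy : s y = false.
    rewrite /s; case: pickP => [u hu //|/(_ x)]; by rewrite hxy.
  have rx : r x = x.
    rewrite /r; case: pickP => [u hu|//].
    have nue : (u, x) != (x, y).
      by rewrite xpair_eqE negb_and eq_sym nxy orbT.
    by have := hN2 _ _ hu hxy nue; rewrite /= eqxx !andbF.
  have sx : s x = true.
    rewrite /s; case: pickP => [u hu|//].
    have nue : (u, x) != (x, y).
      by rewrite xpair_eqE negb_and eq_sym nxy orbT.
    by have := hN2 _ _ hu hxy nue; rewrite /= eqxx !andbF.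
  by rewrite rx ry sx sy eqxx /=; lra.
have -> : (r x == r y) = false.
  apply/negbTE; rewrite /r.
  case: pickP => [u hu|hnx]; case: pickP => [u' hu'|hny].
  - apply/eqP => euu; subst u'.
    have nue : (u, x) != (u, y) by rewrite xpair_eqE eqxx nxy.
    by have := hN2 _ _ hu hu' nue; rewrite /= eqxx.
  - apply/eqP => euy; subst u.
    by apply: (two_cycle hac axy); exact: (hN1 _ hu).
  - apply/eqP => exu; subst u'.
    by rewrite hu' in hxy.
  - exact: nxy.
rewrite mulr0 addr0; lra.
Qed.

Definition hgt (T : finType) (a : rel T) (x : T) : nat :=
  #|[set y | (y != x) && connect a y x]|.

Lemma hgt_lt (T : finType) (a : rel T) (hl : loopless a) (hac : acyclic a) x y :
  a x y -> (hgt a x < hgt a y)%N.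
Proof.
move=> axy; rewrite /hgt; apply: proper_card.
have nxy : x != y by apply/eqP => exy; move: (hl y); rewrite -{1}exy axy.
apply/properP; split.
  apply/fintype.subsetP => z; rewrite !inE => /andP[nzx czx].
  rewrite (connect_trans czx (connect1 axy)) andbT.
  apply/eqP => ezy; subst z.
  case/connectP: czx => p pyp exl.
  have := hac x (y :: p) isT; rewrite /= axy pyp /= -exl eqxx.
  by move=> /(_ isT).
exists x; first by rewrite !inE nxy connect1.
by rewrite !inE eqxx.
Qed.

Definition hr (T : finType) (a : rel T) (x : T) : nat :=
  (hgt a x * #|T| + enum_rank x)%N.

Lemma hr_lt (T : finType) (a : rel T) (hl : loopless a) (hac : acyclic a) x y :
  a x y -> (hr a x < hr a y)%N.
Proof.
move=> /(hgt_lt hl hac) h; rewrite /hr.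
have h1 := ltn_ord (enum_rank x).
apply: (@leq_trans ((hgt a x).+1 * #|T|)).
  by rewrite mulSn addnC ltn_add2r.
apply: leq_trans (leq_addr _ _); exact: leq_mul.
Qed.

Lemma hr_inj (T : finType) (a : rel T) : injective (hr a).
Proof.
move=> x y; rewrite /hr => e.
have hx := ltn_ord (enum_rank x); have hy := ltn_ord (enum_rank y).
have e1 : hgt a x = hgt a y.
  have := congr1 (fun n => (n %/ #|T|)%N) e => /=.
  have n0 : (0 < #|T|)%N by apply: leq_ltn_trans hx.
  by rewrite !divnMDl // !divn_small // !addn0.
have e2 : enum_rank x = enum_rank y :> nat.
  by move: e; rewrite e1 => /eqP; rewrite eqn_add2l => /eqP.
by apply: enum_rank_inj; apply: val_inj.
Qed.

Definition Sarcs (R : realType) (T : finType) (a : rel T) (w : T -> T -> R)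
  (g : T -> T -> R) : R := \sum_x \sum_(y | a x y) w x y * g x y.

Lemma Sarcs_le (R : realType) (T : finType) (a : rel T) (w : T -> T -> R)
  (hw : nonneg_weights a w) (g1 g2 : T -> T -> R) :
  (forall x y, a x y -> g1 x y <= g2 x y) -> Sarcs a w g1 <= Sarcs a w g2.
Proof.
move=> h; apply: ler_sum => x _; apply: ler_sum => y axy.
by apply: ler_wpM2l; [exact: hw | exact: h].
Qed.

Lemma Sarcs_ext (R : realType) (T : finType) (a : rel T) (w : T -> T -> R)
  (g1 g2 : T -> T -> R) :
  (forall x y, a x y -> g1 x y = g2 x y) -> Sarcs a w g1 = Sarcs a w g2.
Proof.
by move=> h; apply: eq_bigr => x _; apply: eq_bigr => y axy; rewrite h.
Qed.

Lemma SarcsD (R : realType) (T : finType) (a : rel T) (w : T -> T -> R)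
  (g1 g2 : T -> T -> R) :
  Sarcs a w (fun x y => g1 x y + g2 x y) = Sarcs a w g1 + Sarcs a w g2.
Proof.
rewrite /Sarcs -big_split; apply: eq_bigr => x _.
by rewrite -big_split; apply: eq_bigr => y _; rewrite mulrDr.
Qed.

Lemma SarcsZ (R : realType) (T : finType) (a : rel T) (w : T -> T -> R)
  (c : R) (g : T -> T -> R) :
  Sarcs a w (fun x y => c * g x y) = c * Sarcs a w g.
Proof.
rewrite /Sarcs mulr_sumr; apply: eq_bigr => x _.
by rewrite mulr_sumr; apply: eq_bigr => y _; rewrite mulrCA.
Qed.

Lemma SarcsB (R : realType) (T : finType) (a : rel T) (w : T -> T -> R)
  (g1 g2 : T -> T -> R) :
  Sarcs a w (fun x y => g1 x y - g2 x y) = Sarcs a w g1 - Sarcs a w g2.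
Proof.
rewrite (@Sarcs_ext R T a w _ (fun x y => g1 x y + (-1) * g2 x y)); last by move=> *; rewrite mulN1r.
by rewrite SarcsD SarcsZ mulN1r.
Qed.

Lemma Sarcs_sum (R : realType) (T : finType) (a : rel T) (w : T -> T -> R)
  (k : nat) (g : nat -> T -> T -> R) :
  \sum_(0 <= t < k) Sarcs a w (g t) = Sarcs a w (fun x y => \sum_(0 <= t < k) g t x y).
Proof.
rewrite /Sarcs exchange_big /=; apply: eq_bigr => x _.
rewrite exchange_big /=; apply: eq_bigr => y _.
by rewrite mulr_sumr.
Qed.

Lemma total_Sarcs (R : realType) (T : finType) (a : rel T) (w : T -> T -> R) :
  total_weight a w = Sarcs a w (fun _ _ => 1).
Proof. by apply: eq_bigr => x _; apply: eq_bigr => y _; rewrite mulr1. Qed.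

Lemma cut_Sarcs (R : realType) (T : finType) (a : rel T) (w : T -> T -> R) X :
  cut_weight a w X = Sarcs a w (fun x y => ((x \in X) && (y \notin X))%:R).
Proof. exact: cutE. Qed.

Definition Nc (T : finType) (a : rel T) (C : {set T}) (x : T) : nat :=
  #|[set c in C | (hr a c < hr a x)%N]|.

Lemma Nc_hle (T : finType) (a : rel T) (C : {set T}) x y :
  (hr a x <= hr a y)%N -> (Nc a C x <= Nc a C y)%N.
Proof.
move=> h; apply: subset_leq_card; apply/fintype.subsetP => z; rewrite !inE.
by case/andP => -> /= hz; apply: leq_trans hz h.
Qed.

Lemma Nc_hlt (T : finType) (a : rel T) (C : {set T}) x y :
  (hr a x < hr a y)%N -> x \in C -> (Nc a C x < Nc a C y)%N.
Proof.
move=> h xC; apply: proper_card; apply/properP; split.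
  apply/fintype.subsetP => z; rewrite !inE.
  by case/andP => -> /= hz; apply: ltn_trans hz h.
by exists x; rewrite !inE ?xC ?h // ltnn.
Qed.

Lemma Nc_inj (T : finType) (a : rel T) (C : {set T}) x y :
  x \in C -> y \in C -> Nc a C x = Nc a C y -> x = y.
Proof.
move=> xC yC e; case: (ltngtP (hr a x) (hr a y)) => h.
- by have := Nc_hlt h xC; rewrite e ltnn.
- by have := Nc_hlt h yC; rewrite e ltnn.
- exact: hr_inj h.
Qed.

Lemma Nc_ltk (T : finType) (a : rel T) (C : {set T}) x :
  x \in C -> (Nc a C x < #|C|)%N.
Proof.
move=> xC; apply: proper_card; apply/properP; split.
  by apply/fintype.subsetP => z; rewrite !inE; case/andP.
by exists x; rewrite // !inE ltnn andbF.
Qed.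

Lemma count_itv (R : realType) (m n k : nat) : (m <= n)%N -> (n <= k)%N ->
  \sum_(0 <= t < k) ((m <= t)%N && (t < n)%N)%:R = (n - m)%:R :> R.
Proof.
elim: k n => [|k IH] n hmn hnk.
  by move: hnk; rewrite leqn0 => /eqP en; subst n; move: hmn; rewrite leqn0 => /eqP ->; rewrite big_geq.
rewrite big_nat_recr //=.
case: (leqP n k) => hnk'.
  by rewrite IH // andbF addr0.
have en : n = k.+1 by apply/eqP; rewrite eqn_leq hnk hnk'.
subst n.
case: (leqP m k) => hmk.
  rewrite /=.
  rewrite (eq_big_nat _ _ (F2 := fun t => ((m <= t)%N && (t < k)%N)%:R)); last first.
    by move=> t /andP[_ ht]; rewrite ht (ltn_trans ht (ltnSn k)).
  rewrite IH // subSn // natr1 //.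
have em : m = k.+1 by apply/eqP; rewrite eqn_leq hmn hmk.
subst m; rewrite subnn big1_seq ?add0r.
  by [].
by move=> t; rewrite mem_iota add0n subn0 => /andP[_ ht]; rewrite leqNgt (ltn_trans ht (ltnSn k)).
Qed.

Lemma minn_sum (R : realType) (n J : nat) :
  \sum_(0 <= j < J) (j < n)%N%:R = (minn n J)%:R :> R.
Proof.
elim: J => [|J IH]; first by rewrite big_geq // minn0.
rewrite big_nat_recr //= IH.
rewrite -natrD; congr (_%:R); case: (ltnP J n) => /= h; lia.
Qed.

Lemma thr_sum (R : realType) (T : finType) (a : rel T) (w : T -> T -> R)
  (hl : loopless a) (hac : acyclic a) (hw : nonneg_weights a w) (C : {set T}) :
  Sarcs a w (fun x y => ((x \in C) && (y \in C))%:R * (Nc a C y - Nc a C x)%:R)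
  <= \sum_(0 <= t < #|C|) cut_weight a w [set x | (Nc a C x <= t)%N].
Proof.
under eq_bigr => t _ do rewrite cut_Sarcs.
rewrite Sarcs_sum; apply: Sarcs_le => // x y axy.
have hle := Nc_hle C (ltnW (hr_lt hl hac axy)).
case: (boolP ((x \in C) && (y \in C))) => [/andP[xC yC]|_]; last first.
  by rewrite mul0r; apply: sumr_ge0 => *; apply: ler0n.
rewrite mul1r (eq_big_nat _ _ (F2 := fun t => ((Nc a C x <= t)%N && (t < Nc a C y)%N)%:R)).
  by rewrite count_itv // ltnW // Nc_ltk.
by move=> t _; rewrite !inE -ltnNge.
Qed.

Lemma par_shift (p q l : nat) : (0 < l)%N -> p = (q + l)%N -> odd (p %/ l) = ~~ odd (q %/ l).
Proof.
move=> l0 ->; by rewrite divnDr ?dvdnn // divnn l0 addn1 oddS.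
Qed.

Lemma class_le (R : realType) (T : finType) (a : rel T) (w : T -> T -> R)
  (hl : loopless a) (hac : acyclic a) (C : {set T}) (M : R)
  (hM : forall S, matchingb a S -> ws w S <= M) (l : nat) (l0 : (0 < l)%N) :
  Sarcs a w (fun x y => [&& x \in C, y \in C & (Nc a C y - Nc a C x == l)%N]%:R) <= 2%:R * M.
Proof.
pose S b := [set e : T * T | [&& a e.1 e.2, e.1 \in C, e.2 \in C,
   (Nc a C e.2 - Nc a C e.1 == l)%N & odd (Nc a C e.1 %/ l) == b]].
have hSa : forall b e, e \in S b -> a e.1 e.2.
  by move=> b e; rewrite inE => /andP[].
have key : forall b x y, (x, y) \in S b ->
    [/\ x \in C, y \in C, Nc a C y = (Nc a C x + l)%N & odd (Nc a C x %/ l) = b].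
  move=> b x y; rewrite inE /= => /and5P[axy xC yC /eqP hl' /eqP pb].
  split => //.
  have := @Nc_hlt _ a C _ _ (hr_lt hl hac axy) xC; lia.
have hSm : forall b, matchingb a (S b).
  move=> b; apply/andP; split.
    by apply/forallP => e; apply/implyP => he; exact: hSa he.
  apply/forallP => [[x y]]; apply/implyP => he; apply/forallP => [[x' y']].
  apply/implyP => he'; apply/implyP => ne.
  have [xC yC ey px] := key _ _ _ he.
  have [xC' yC' ey' px'] := key _ _ _ he'.
  rewrite /=; apply/and4P; split.
  - apply/eqP => exx; subst x'.
    have eyy : y = y' by apply: (@Nc_inj _ a C _ _ yC yC'); lia.
    by subst y'; rewrite eqxx in ne.
  - apply/eqP => exy; subst y'.
    by move: px; rewrite (par_shift l0 ey') px'; case: (b).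
  - apply/eqP => eyx; subst x'.
    by move: px'; rewrite (par_shift l0 ey) px; case: (b).
  - apply/eqP => eyy; subst y'.
    have exx : x = x' by apply: (@Nc_inj _ a C _ _ xC xC'); lia.
    by subst x'; rewrite eqxx in ne.
have -> : Sarcs a w (fun x y => [&& x \in C, y \in C & (Nc a C y - Nc a C x == l)%N]%:R)
   = ws w (S true) + ws w (S false).
  rewrite -(@ws_arcs R T a w _ (hSa true)) -(@ws_arcs R T a w _ (hSa false)).
  rewrite -(SarcsD a w (fun x y => ((x, y) \in S true)%:R) (fun x y => ((x, y) \in S false)%:R)).
  apply: Sarcs_ext => x y axy; rewrite !inE /= axy.
  by case: (x \in C); case: (y \in C); case: (_ == l)%N; case: (odd _); rewrite /= ?addr0 ?add0r.
have h1 := hM _ (hSm true); have h2 := hM _ (hSm false); lra.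
Qed.

Lemma Sarcs0 (R : realType) (T : finType) (a : rel T) (w : T -> T -> R) (g : T -> T -> R) :
  (forall x y, a x y -> g x y = 0) -> Sarcs a w g = 0.
Proof.
move=> h; rewrite (@Sarcs_ext R T a w g (fun x y => 0 * 1)); last by move=> x y axy; rewrite h // mul0r.
by rewrite SarcsZ mul0r.
Qed.

Lemma sum_lin (R : realType) (c d : R) (J : nat) :
  \sum_(0 <= j < J) (c - d * j%:R) = J%:R * c - d * J%:R * (J%:R - 1) / 2%:R.
Proof.
elim: J => [|J IH]; first by rewrite big_geq //; field; done.
rewrite big_nat_recr //= IH -natr1; field; done.
Qed.

Lemma len_bound (R : realType) (T : finType) (a : rel T) (w : T -> T -> R)
  (hl : loopless a) (hac : acyclic a) (hw : nonneg_weights a w) (C : {set T}) (M : R)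
  (hM : forall S, matchingb a S -> ws w S <= M) (J : nat) :
  J%:R * Sarcs a w (fun x y => ((x \in C) && (y \in C))%:R)
    - M * J%:R * (J%:R - 1)
  <= Sarcs a w (fun x y => ((x \in C) && (y \in C))%:R * (Nc a C y - Nc a C x)%:R).
Proof.
pose ic x y := ((x \in C) && (y \in C)).
pose ln x y := (Nc a C y - Nc a C x)%N.
have lnpos : forall x y, a x y -> ic x y -> (0 < ln x y)%N.
  move=> x y axy /andP[xC _]; rewrite /ln subn_gt0.
  exact: (@Nc_hlt _ a C _ _ (hr_lt hl hac axy) xC).
have h3 : forall j : nat, Sarcs a w (fun x y => (ic x y)%:R * (ln x y <= j)%N%:R) <= 2%:R * M * j%:R.
  elim => [|j IH].
    rewrite Sarcs0 ?mulr0 // => x y axy.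
    case: (boolP (ic x y)) => h; last by rewrite mul0r.
    by move: (lnpos x y axy h); rewrite leqn0 lt0n => /negbTE ->; rewrite mulr0.
  rewrite (@Sarcs_ext R T a w _ (fun x y => (ic x y)%:R * (ln x y <= j)%N%:R
           + [&& x \in C, y \in C & (Nc a C y - Nc a C x == j.+1)%N]%:R)); last first.
    move=> x y axy; rewrite /ic /ln.
    case: (x \in C); case: (y \in C); rewrite /= ?mul0r ?mul1r ?addr0 //.
    have [->|ne] := eqVneq (Nc a C y - Nc a C x)%N j.+1.
      by rewrite leqnn ltnn add0r.
    by rewrite leq_eqVlt (negbTE ne) /= ltnS addr0.
  rewrite SarcsD; have := @class_le R T a w hl hac C M hM j.+1 (ltn0Sn j).
  rewrite -natr1; lra.
have h2 : forall j : nat, Sarcs a w (fun x y => (ic x y)%:R * (j < ln x y)%N%:R)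
   = Sarcs a w (fun x y => (ic x y)%:R) - Sarcs a w (fun x y => (ic x y)%:R * (ln x y <= j)%N%:R).
  move=> j; rewrite -SarcsB; apply: Sarcs_ext => x y _.
  by rewrite ltnNge; case: (ln x y <= j)%N; rewrite /= ?mulr1 ?mulr0 ?subr0 ?subrr.
apply: (@le_trans _ _ (\sum_(0 <= j < J) Sarcs a w (fun x y => (ic x y)%:R * (j < ln x y)%N%:R))).
  under eq_bigr => j _ do rewrite h2.
  apply: (@le_trans _ _ (\sum_(0 <= j < J) (Sarcs a w (fun x y => (ic x y)%:R) - 2%:R * M * j%:R))).
    rewrite sum_lin; lra.
  by apply: ler_sum => j _; rewrite lerD2l lerN2.
rewrite Sarcs_sum; apply: Sarcs_le => // x y axy.
rewrite -mulr_sumr; apply: ler_wpM2l; first by apply: ler0n.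
rewrite (minn_sum R (ln x y) J) ler_nat; exact: geq_minl.
Qed.

Definition Cset (T : finType) (N : {set T * T}) : {set T} :=
  [set v | [exists e in N, (e.1 == v) || (e.2 == v)]].

Lemma in_Cset1 (T : finType) (N : {set T * T}) e : e \in N -> e.1 \in Cset N.
Proof. by move=> he; rewrite inE; apply/existsP; exists e; rewrite he eqxx. Qed.

Lemma in_Cset2 (T : finType) (N : {set T * T}) e : e \in N -> e.2 \in Cset N.
Proof. by move=> he; rewrite inE; apply/existsP; exists e; rewrite he eqxx orbT. Qed.

Lemma cover (R : realType) (T : finType) (a : rel T) (w : T -> T -> R)
  (hw1 : forall x y, a x y -> 1 <= w x y) (N : {set T * T}) (hN : matchingb a N)
  (hmax : forall S, matchingb a S -> ws w S <= ws w N) x y :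
  a x y -> (x \in Cset N) || (y \in Cset N).
Proof.
move=> axy; apply/negPn/negP; rewrite negb_or => /andP[nx ny].
have [hN1 hN2] := matchingP hN.
have nin : (x, y) \notin N by apply/negP => h; move: nx; rewrite (in_Cset1 h).
pose S := (x, y) |: N.
have hS : matchingb a S.
  apply/andP; split.
    apply/forallP => e; apply/implyP; rewrite !inE => /orP[/eqP -> //|]; exact: hN1.
  apply/forallP => e; apply/implyP => he; apply/forallP => e'; apply/implyP => he'.
  apply/implyP => ne.
  move: he he'; rewrite !inE => /orP[/eqP ee|he] /orP[/eqP ee'|he'].
  - by move: ne; rewrite ee ee' eqxx.
  - subst e; rewrite /=.
    have c1 := in_Cset1 he'; have c2 := in_Cset2 he'.
    by apply/and4P; split; apply/eqP => h; [move: nx|move: nx|move: ny|move: ny];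
       rewrite h ?c1 ?c2.
  - subst e'; rewrite /=.
    have c1 := in_Cset1 he; have c2 := in_Cset2 he.
    by apply/and4P; split; apply/eqP => h; [move: nx|move: ny|move: nx|move: ny];
       rewrite -h ?c1 ?c2.
  - exact: hN2.
have := hmax _ hS; rewrite /ws big_setU1 //= => h.
have := hw1 _ _ axy; lra.
Qed.

Lemma cardC (T : finType) (N : {set T * T}) : (#|Cset N| <= 2 * #|N|)%N.
Proof.
have sub : Cset N \subset [set e.1 | e in N] :|: [set e.2 | e in N].
  apply/fintype.subsetP => v; rewrite inE => /existsP[e /andP[he /orP[/eqP <-|/eqP <-]]].
    by rewrite inE; apply/orP; left; apply: imset_f.
  by rewrite inE; apply/orP; right; apply: imset_f.
apply: (leq_trans (subset_leq_card sub)).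
rewrite cardsU mul2n -addnn; apply: (leq_trans (leq_subr _ _)).
by apply: leq_add; apply: leq_imset_card.
Qed.

Lemma cardN_le (R : realType) (T : finType) (a : rel T) (w : T -> T -> R)
  (hw1 : forall x y, a x y -> 1 <= w x y) (N : {set T * T}) (hN : matchingb a N) :
  (#|N|)%:R <= ws w N.
Proof.
have [hN1 _] := matchingP hN.
rewrite -sum1_card natr_sum /ws; apply: ler_sum => e he; exact: hw1 (hN1 _ he).
Qed.

Lemma case1 (R : realType) (T : finType) (a : rel T) (w : T -> T -> R)
  (C : {set T}) (hC : forall x y, a x y -> (x \in C) || (y \in C)) :
  total_weight a w - Sarcs a w (fun x y => ((x \in C) && (y \in C))%:R) <= 2%:R * mac a w.
Proof.
have h1 := mac_ge a w C; have h2 := mac_ge a w (~: C).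
have -> : total_weight a w - Sarcs a w (fun x y => ((x \in C) && (y \in C))%:R)
        = cut_weight a w C + cut_weight a w (~: C).
  rewrite total_Sarcs !cut_Sarcs -SarcsB -SarcsD; apply: Sarcs_ext => x y axy.
  move: (hC x y axy); rewrite !inE.
  by case: (x \in C); case: (y \in C); rewrite /= ?subr0 ?subrr ?addr0 ?add0r.
lra.
Qed.

Lemma final_arith (R : realType) (W y M WC L k Phi m : R) :
  1 <= W -> 0 <= y -> y ^+ 5 = W ^+ 3 -> 0 < M -> 5%:R / 12%:R * W < WC ->
  WC ^+ 2 / (4%:R * M) <= L -> k <= 2%:R * M -> 0 < k -> L <= k * Phi -> 0 <= Phi ->
  W / 4%:R + M / 4%:R <= m -> W / 4%:R + Phi ^+ 2 / (4%:R * W) <= m ->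
  W / 4%:R + y / 24%:R <= m.
Proof.
move=> W1 y0 y5 M0 hWC hL hk k0 hkP P0 mA mB.
case: (lerP y (6%:R * M)) => hy; first lra.
have y0' : 0 < y by lra.
have WC0 : 0 < WC by lra.
have h1 : WC ^+ 2 <= Phi * (8%:R * M ^+ 2).
  have : WC ^+ 2 / (4%:R * M) <= Phi * (2%:R * M) by nra.
  rewrite ler_pdivrMr; last by lra.
  move=> h; apply: le_trans h _; rewrite !expr2; nra.
have h2 : 25%:R / 144%:R * W ^+ 2 < WC ^+ 2 by rewrite !expr2; nra.
have h3 : M ^+ 2 * 36%:R < y ^+ 2 by rewrite !expr2; nra.
have h4 : 25%:R / 32%:R * W ^+ 2 < Phi * y ^+ 2.
  have : Phi * (8%:R * M ^+ 2) * 36%:R <= Phi * 8%:R * y ^+ 2 by nra.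
  lra.
have h5 : 625%:R / 1024%:R * W ^+ 4 < Phi ^+ 2 * y ^+ 4.
  have W2 : 0 <= 25%:R / 32%:R * W ^+ 2 by rewrite !expr2; nra.
  have hh : (25%:R / 32%:R * W ^+ 2) * (25%:R / 32%:R * W ^+ 2) < (Phi * y ^+ 2) * (Phi * y ^+ 2) by nra.
  have e1 : (25%:R / 32%:R * W ^+ 2) * (25%:R / 32%:R * W ^+ 2) = 625%:R / 1024%:R * W ^+ 4 by field.
  have e2 : (Phi * y ^+ 2) * (Phi * y ^+ 2) = Phi ^+ 2 * y ^+ 4 by ring.
  by rewrite -e1 -e2.
have h6 : W ^+ 4 = W * y ^+ 5 by rewrite y5 -exprS.
rewrite h6 in h5.
have y4 : 0 < y ^+ 4 by apply: exprn_gt0.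
have h7 : 625%:R / 1024%:R * W * y < Phi ^+ 2.
  have e : y ^+ 5 = y * y ^+ 4 by rewrite exprS.
  rewrite e in h5.
  have : (625%:R / 1024%:R * W * y) * y ^+ 4 < Phi ^+ 2 * y ^+ 4 by lra.
  by rewrite ltr_pM2r.
have h8 : y / 24%:R <= Phi ^+ 2 / (4%:R * W).
  rewrite ler_pdivlMr; last lra.
  have : y * 24%:R^-1 * (4%:R * W) = y * W / 6%:R by field.
  move=> ->; nra.
lra.
Qed.

Lemma cut_ge0 (R : realType) (T : finType) (a : rel T) (w : T -> T -> R)
  (hw : nonneg_weights a w) X : 0 <= cut_weight a w X.
Proof.
rewrite cut_Sarcs; apply: sumr_ge0 => x _; apply: sumr_ge0 => y axy.
by apply: mulr_ge0; [exact: hw | exact: ler0n].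
Qed.

Lemma cut_leW (R : realType) (T : finType) (a : rel T) (w : T -> T -> R)
  (hw : nonneg_weights a w) X : cut_weight a w X <= total_weight a w.
Proof.
rewrite cut_Sarcs total_Sarcs; apply: Sarcs_le => // x y _.
by case: (_ && _).
Qed.

Lemma W_cases (R : realType) (T : finType) (a : rel T) (w : T -> T -> R)
  (hw : nonneg_weights a w) (hw1 : forall x y, a x y -> 1 <= w x y) :
  total_weight a w = 0 \/ 1 <= total_weight a w.
Proof.
case: (boolP [exists x, [exists y, a x y]]).
  move=> /existsP[x /existsP[y axy]]; right.
  rewrite /total_weight (bigD1 x) //= (bigD1 y) //=.
  have h1 := hw1 x y axy.
  have h2 : 0 <= \sum_(i | a x i && (i != y)) w x i.
    by apply: sumr_ge0 => i /andP[h _]; exact: hw.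
  have h3 : 0 <= \sum_(i | i != x) \sum_(j | a i j) w i j.
    by apply: sumr_ge0 => i _; apply: sumr_ge0 => j h; exact: hw.
  lra.
move=> hn; left; apply: big1 => x _; apply: big1 => y axy.
by move: hn; rewrite negb_exists => /forallP /(_ x); rewrite negb_exists => /forallP /(_ y); rewrite axy.
Qed.

Lemma ex_thr (R : realType) (k : nat) (f : nat -> R) (L : R) :
  (0 < k)%N -> L <= \sum_(0 <= t < k) f t -> exists t, (t < k)%N /\ L <= k%:R * f t.
Proof.
move=> k0 hL.
case: (boolP [exists t : 'I_k, L <= k%:R * f t]).
  by move=> /existsP[t ht]; exists t.
rewrite negb_exists => /forallP hn.
have : \sum_(0 <= t < k) (k%:R * f t) < \sum_(0 <= t < k) L.
  apply: ltr_sum_nat => // t /andP[_ ht].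
  by have := hn (Ordinal ht); rewrite -ltNge.
rewrite -mulr_sumr sumr_const_nat subn0 -mulr_natl.
have kp : 0 < k%:R :> R by rewrite ltr0n.
nra.
Qed.

Unset Implicit Arguments.

Theorem mainTheorem12 (R : realType) (T : finType) (a : rel T) (w : T -> T -> R) :
  loopless a ->
  nonneg_weights a w ->
  acyclic a ->
  (forall x y, a x y -> 1 <= w x y) ->
  mac a w >= total_weight a w / 4%:R
             + powR (total_weight a w) (3%:R / 5%:R) / 24%:R.
Proof.
move=> hl hw hac hw1.
have mac0 : 0 <= mac a w.
  by apply: (le_trans _ (mac_ge a w finset.set0)); rewrite /cut_weight big_set0.
case: (W_cases hw hw1) => [W0|W1].
  rewrite W0 powR0; last by apply/eqP => h; lra.
  by rewrite !mul0r addr0.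
set W := total_weight a w.
have {}W1 : 1 <= W by [].
set y := powR W (3%:R / 5%:R).
have y0 : 0 <= y by apply: powR_ge0.
have y5 : y ^+ 5 = W ^+ 3.
  rewrite /y -powR_mulrn; last exact: powR_ge0.
  rewrite -powRrM (_ : 3%:R / 5%:R * 5%:R = 3%:R :> R); last by field.
  by rewrite powR_mulrn //; lra.
have yW : y <= W by rewrite /y ler1_powR //; lra.
have m0 : matchingb a finset.set0.
  by apply/andP; split; apply/forallP => e; rewrite inE.
pose N := [arg max_(S > finset.set0 | matchingb a S) ws w S]%O.
have [hN hmax] : matchingb a N /\ forall S, matchingb a S -> ws w S <= ws w N.
  by rewrite /N; case: arg_maxP => // S hS hmax; split => // S' /hmax.
set M := ws w N.
set C := Cset N.
have hC := cover hw1 hN hmax.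
have mA := match_mac hl hw hac hN.
rewrite -/W -/M in mA.
set WC := Sarcs a w (fun x y => ((x \in C) && (y \in C))%:R).
case: (lerP WC (5%:R / 12%:R * W)) => hWC.
  have h := @case1 R T a w C hC.
  rewrite -/W -/WC in h.
  lra.
have k0 : (0 < #|C|)%N.
  rewrite lt0n; apply/negP => /eqP /cards0_eq C0.
  have : WC = 0.
    by rewrite /WC Sarcs0 // => x y0' _; rewrite C0 inE.
  lra.
have hk : (#|C|)%:R <= 2%:R * M.
  apply: (@le_trans _ _ (2 * #|N|)%N%:R); first by rewrite ler_nat cardC.
  by rewrite natrM; apply: ler_wpM2l => //; exact: (@cardN_le R T a w hw1 N hN).
have M0 : 0 < M.
  have : (0 < (#|C|)%:R :> R) by rewrite ltr0n.
  lra.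
pose L := Sarcs a w (fun x y => ((x \in C) && (y \in C))%:R * (Nc a C y - Nc a C x)%:R).
have hth := thr_sum hl hac hw C.
have [t [tk ht]] := ex_thr k0 hth.
pose P := [set x | (Nc a C x <= t)%N].
set Phi := cut_weight a w P.
have P0 : 0 <= Phi by apply: cut_ge0.
have PW : Phi <= W by apply: cut_leW.
have hP : forall x y, a x y -> y \in P -> x \in P.
  move=> x y' axy; rewrite !inE => h; apply: leq_trans h.
  exact: (@Nc_hle T a C _ _ (ltnW (hr_lt hl hac axy))).
have mB : W / 4%:R + Phi ^+ 2 / (4%:R * W) <= mac a w.
  have d0 : 0 <= Phi / (2%:R * W) by apply: divr_ge0 => //; lra.
  have d1 : Phi / (2%:R * W) <= 2^-1.
    rewrite ler_pdivrMr; last lra.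
    lra.
  have := step_mac hl hw hP d0 d1; rewrite -/W -/Phi.
  have -> : W / 4%:R + Phi / (2%:R * W) * Phi - (Phi / (2%:R * W)) ^+ 2 * W
     = W / 4%:R + Phi ^+ 2 / (4%:R * W) by field; lra.
  by [].
pose x := WC / (2%:R * M).
have x0 : 0 <= x by apply: divr_ge0; lra.
pose J := (Num.trunc x).+1.
have [hJ1 hJ2] : (J%:R - 1 <= x) /\ (x < J%:R).
  have /andP[h1 h2] := truncn_itv x0.
  by rewrite /J -natr1; split; lra.
have hLJ := @len_bound R T a w hl hac hw C M hmax J.
rewrite -/WC -/M in hLJ.
have hL : WC ^+ 2 / (4%:R * M) <= L.
  apply: le_trans hLJ.
  have eWC : WC = 2%:R * M * x by rewrite /x; field; lra.
  rewrite eWC.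
  have q : x ^+ 2 <= J%:R * (2%:R * x - J%:R + 1) by rewrite expr2; nra.
  have -> : (2%:R * M * x) ^+ 2 / (4%:R * M) = M * x ^+ 2 by field; lra.
  nra.
apply: (final_arith W1 y0 y5 M0 hWC hL hk _ ht P0 mA mB).
by rewrite ltr0n.
Qed.
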